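(* Let $\mathcal E$ be either an energy-preserving channel or, more generally, a unital average-energy non-increasing channel on $S$, let $\tau\in\mathsf P(S)$ be a passive state, let $p\in[0,1]$, and define the channel $\mathcal C(\rho)=p\,\mathcal E(\rho)+(1-p)\,\tau$. Then $\mathsf{Erg}(\mathcal C(\rho))\le \mathsf{Erg}(\rho)$ for every state $\rho\in\mathsf{St}(S)$. In particular every channel obtained by energy-preserving channels and passive resets (EPCPR) is ergotropy non-increasing.
   Context: $S$ is a $d$-dimensional quantum system with non-degenerate Hamiltonian $H=\sum_{i=1}^d E_i|i\rangle\langle i|$, $E_1<E_2<\dots<E_d$; $\mathsf{St}(S)$ is the set of density matrices on $\mathbb C^d$. The ergotropy of $\rho$ is $\mathsf{Erg}(\rho)=\mathrm{Tr}[H\rho]-\min_U \mathrm{Tr}[HU\rho U^\dagger]$, minimum over all unitaries $U$. A state is passive if its ergotropy is zero; equivalently, it is of the form $\sum_i p_i|i\rangle\langle i|$ with $p_1\ge p_2\ge\dots\ge p_d$. $\mathsf P(S)$ denotes the set of passive states. An energy-preserving channel is a quantum channel (CPTP map) $\mathcal E$ with $\langle i|\mathcal E(\rho)|i\rangle=\langle i|\rho|i\rangle$ for all states $\rho$ and all $i$. A unital average-energy non-increasing channel is a quantum channel $\mathcal E$ with $\mathcal E(I)=I$ and $\mathrm{Tr}[H\mathcal E(\rho)]\le\mathrm{Tr}[H\rho]$ for all states $\rho$. *)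

(* Defs.v *)
From HB Require Import structures.
From mathcomp Require Import all_boot all_order all_algebra.
From mathcomp Require Import complex mxtens.
From mathcomp Require Import classical_sets reals.
Set Implicit Arguments. Unset Strict Implicit. Unset Printing Implicit Defensive.
Import Order.TTheory GRing.Theory Num.Theory.
Local Open Scope ring_scope.
Local Open Scope complex_scope.

Section QDefs.
Variable R : realType.
Local Notation C := R[i].

Definition adjmx {m n : nat} (A : 'M[C]_(m, n)) : 'M[C]_(n, m) :=
  (map_mx (@conjc R) A)^T.

Definition psd {n : nat} (A : 'M[C]_n) : Prop :=
  A = adjmx A /\ forall v : 'cV[C]_n, 0 <= (adjmx v *m A *m v) 0 0.

Definition state {d : nat} (rho : 'M[C]_d) : Prop := psd rho /\ \tr rho = 1.

Definition unitary {d : nat} (U : 'M[C]_d) : Prop :=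
  adjmx U *m U = 1%:M /\ U *m adjmx U = 1%:M.

Definition hamiltonian {d : nat} (E : 'I_d -> R) : 'M[C]_d :=
  diag_mx (\row_i (E i)%:C).

(* Tr[H rho] (real part; it is real for hermitian rho) *)
Definition energy {d : nat} (H rho : 'M[C]_d) : R := complex.Re (\tr (H *m rho)).

(* Erg(rho) = Tr[H rho] - min_U Tr[H U rho U^dagger]  (min taken as inf) *)
Definition ergotropy {d : nat} (H rho : 'M[C]_d) : R :=
  energy H rho -
  inf (fun x : R => exists U : 'M[C]_d, unitary U /\
                      x = energy H (U *m rho *m adjmx U)).

Definition passive {d : nat} (H tau : 'M[C]_d) : Prop :=
  state tau /\ ergotropy H tau = 0.

(* ampliation id_n (x) Phi acting on C^n (x) C^d *)
Definition ampl (n : nat) {d : nat} (Phi : 'M[C]_d -> 'M[C]_d)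
  (X : 'M[C]_(n * d)) : 'M[C]_(n * d) :=
  \matrix_(i, j)
    (Phi (\matrix_(a, b) X (mxtens_index ((mxtens_unindex i).1, a))
                            (mxtens_index ((mxtens_unindex j).1, b))))
      (mxtens_unindex i).2 (mxtens_unindex j).2.

Definition completely_positive {d : nat} (Phi : 'M[C]_d -> 'M[C]_d) : Prop :=
  forall (n : nat) (X : 'M[C]_(n * d)), psd X -> psd (ampl Phi X).

Definition channel {d : nat} (Phi : 'M[C]_d -> 'M[C]_d) : Prop :=
  [/\ forall (a : C) (A B : 'M[C]_d), Phi (a *: A + B) = a *: Phi A + Phi B,
      forall A : 'M[C]_d, \tr (Phi A) = \tr A
    & completely_positive Phi].

Definition energy_preserving {d : nat} (Phi : 'M[C]_d -> 'M[C]_d) : Prop :=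
  channel Phi /\ forall rho : 'M[C]_d, state rho -> forall i, Phi rho i i = rho i i.

Definition unital_energy_nonincreasing {d : nat} (H : 'M[C]_d)
  (Phi : 'M[C]_d -> 'M[C]_d) : Prop :=
  [/\ channel Phi, Phi 1%:M = 1%:M
    & forall rho : 'M[C]_d, state rho -> energy H (Phi rho) <= energy H rho].

(* one EPCPR building block: rho |-> p Phi(rho) + (1-p) Tr(rho) tau,
   with Phi energy preserving and tau passive (p = 1: EP channel,
   p = 0: passive reset) *)
Definition epcpr_step {d : nat} (H : 'M[C]_d) (Psi : 'M[C]_d -> 'M[C]_d) : Prop :=
  exists (p : R) (Phi : 'M[C]_d -> 'M[C]_d) (tau : 'M[C]_d),
    [/\ 0 <= p <= 1, energy_preserving Phi, passive H tau
      & forall rho, Psi rho = (p%:C) *: Phi rho + ((1 - p)%:C * \tr rho) *: tau].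

Definition epcpr {d : nat} (H : 'M[C]_d) (Psi : 'M[C]_d -> 'M[C]_d) : Prop :=
  exists s : seq ('M[C]_d -> 'M[C]_d),
    (forall k : nat, (k < size s)%N -> epcpr_step H (nth id s k)) /\ Psi =1 foldr (fun f g => f \o g) id s.
End QDefs.

(* Main.v *)
Require Import Defs.
From HB Require Import structures.
From mathcomp Require Import all_boot all_order all_algebra.
From mathcomp Require Import complex mxtens.
From mathcomp Require Import classical_sets reals.
From mathcomp Require Import fingroup perm.
From mathcomp Require Import spectral sesquilinear ring lra zify.
Set Implicit Arguments. Unset Strict Implicit. Unset Printing Implicit Defensive.
Import Order.TTheory GRing.Theory Num.Theory.
Local Open Scope ring_scope.
Local Open Scope complex_scope.
Section Basics.
Context {R : realType}.
Local Notation C := R[i].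

Lemma ReD (x y : C) : complex.Re (x + y) = complex.Re x + complex.Re y.
Proof. by case: x => a b; case: y. Qed.
Lemma ReM_real (a : R) (x : C) : complex.Re (a%:C * x) = a * complex.Re x.
Proof. by case: x => b c /=; rewrite mul0r subr0. Qed.
Lemma Re_sum (I : Type) (r : seq I) (P : pred I) (F : I -> C) :
  complex.Re (\sum_(i <- r | P i) F i) = \sum_(i <- r | P i) complex.Re (F i).
Proof. elim/big_rec2: _ => // i y z _ IH; rewrite ReD; congr (_ + _); done. Qed.
Lemma ge0_Re (z : C) : 0 <= z -> 0 <= complex.Re z.
Proof. by rewrite lecE => /andP[]. Qed.
Lemma ge0_real (z : C) : 0 <= z -> z = (complex.Re z)%:C.
Proof. by case: z => a b; rewrite lecE /= => /andP[/eqP -> _]. Qed.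

Lemma adjmxE m n (A : 'M[C]_(m,n)) i j : adjmx A i j = conjc (A j i).
Proof. by rewrite !mxE. Qed.
Lemma adjmxK m n (A : 'M[C]_(m,n)) : adjmx (adjmx A) = A.
Proof. by apply/matrixP => i j; rewrite !mxE conjcK. Qed.
Lemma adjmxM m n p (A : 'M[C]_(m,n)) (B : 'M_(n,p)) :
  adjmx (A *m B) = adjmx B *m adjmx A.
Proof.
apply/matrixP=> i j; rewrite !mxE rmorph_sum; apply: eq_bigr => k _.
by rewrite !mxE rmorphM mulrC.
Qed.
Lemma adjmxD m n (A B : 'M[C]_(m,n)) : adjmx (A + B) = adjmx A + adjmx B.
Proof. by apply/matrixP=> i j; rewrite !mxE rmorphD. Qed.
Lemma adjmxZ m n (a : C) (A : 'M[C]_(m,n)) : adjmx (a *: A) = conjc a *: adjmx A.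
Proof. by apply/matrixP=> i j; rewrite !mxE rmorphM. Qed.
Lemma adjmx1 n : adjmx (1%:M : 'M[C]_n) = 1%:M.
Proof. by apply/matrixP=> i j; rewrite !mxE conjc_nat eq_sym. Qed.
Lemma adjmx_delta m n (i : 'I_m) (j : 'I_n) : adjmx (delta_mx i j : 'M[C]_(m,n)) = delta_mx j i.
Proof. by apply/matrixP=> a b; rewrite !mxE conjc_nat andbC. Qed.

Definition qf n (v : 'cV[C]_n) (X : 'M[C]_n) := (adjmx v *m X *m v) 0 0.

Lemma psd_conj m n (U : 'M[C]_(m,n)) (X : 'M[C]_n) : psd X -> psd (U *m X *m adjmx U).
Proof.
case=> hX pX; split.
  by rewrite !adjmxM adjmxK -hX mulmxA.
move=> v; have := pX (adjmx U *m v).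
by rewrite !adjmxM adjmxK !mulmxA.
Qed.

Lemma psd_diag n (X : 'M[C]_n) i : psd X -> 0 <= X i i.
Proof.
case=> _ /(_ (delta_mx i 0)); rewrite adjmx_delta -rowE -colE.
by rewrite !mxE.
Qed.

Lemma psd_add n (X Y : 'M[C]_n) : psd X -> psd Y -> psd (X + Y).
Proof.
case=> hX pX [hY pY]; split; first by rewrite adjmxD -hX -hY.
by move=> v; rewrite mulmxDr mulmxDl mxE addr_ge0.
Qed.

Lemma psd_scale n (a : R) (X : 'M[C]_n) : 0 <= a -> psd X -> psd (a%:C *: X).
Proof.
move=> a0 [hX pX]; split; first by rewrite adjmxZ conjc_real -hX.
by move=> v; rewrite -scalemxAr -scalemxAl mxE mulr_ge0 ?ler0c.
Qed.

Lemma psd_rank1 n (w : 'cV[C]_n) : psd (w *m adjmx w).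
Proof.
split; first by rewrite adjmxM adjmxK.
move=> v; rewrite mulmxA -mulmxA mxE big_ord1.
have -> : adjmx w *m v = adjmx (adjmx v *m w) by rewrite adjmxM adjmxK.
rewrite adjmxE; apply: mulcJ_ge0.
Qed.

Variable d : nat.
Variable E : 'I_d -> R.
Local Notation H := (hamiltonian E).

Lemma energyE (X : 'M[C]_d) : energy H X = \sum_i E i * complex.Re (X i i).
Proof.
rewrite /energy /hamiltonian /mxtrace Re_sum; apply: eq_bigr => i _.
by rewrite mul_diag_mx !mxE ReM_real.
Qed.

Lemma energy_lin (a : R) (X Y : 'M[C]_d) :
  energy H (a%:C *: X + Y) = a * energy H X + energy H Y.
Proof.
by rewrite /energy mulmxDr mxtraceD -scalemxAr mxtraceZ ReD ReM_real.
Qed.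

Lemma unitary1 : unitary (1%:M : 'M[C]_d).
Proof. by rewrite /unitary adjmx1 mul1mx. Qed.

Lemma unitaryM (U V : 'M[C]_d) : unitary U -> unitary V -> unitary (U *m V).
Proof.
case=> U1 U2 [V1 V2]; split; rewrite adjmxM.
  by rewrite mulmxA -[adjmx V *m _ *m _]mulmxA U1 mulmx1 V1.
by rewrite mulmxA -[U *m V *m _]mulmxA V2 mulmx1 U2.
Qed.

Lemma unitary_adj (U : 'M[C]_d) : unitary U -> unitary (adjmx U).
Proof. by case=> U1 U2; split; rewrite adjmxK. Qed.

Lemma trace_conj (U X : 'M[C]_d) : unitary U -> \tr (U *m X *m adjmx U) = \tr X.
Proof. by case=> U1 _; rewrite mxtrace_mulC mulmxA U1 mul1mx. Qed.

Definition Pe (X : 'M[C]_d) := inf (fun x : R => exists U : 'M[C]_d, unitary U /\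
                      x = energy H (U *m X *m adjmx U)).

Lemma ergE X : ergotropy H X = energy H X - Pe X.
Proof. by []. Qed.

Lemma energy_lb (X U : 'M[C]_d) : psd X -> unitary U ->
  - (\sum_j `|E j|) * complex.Re (\tr X) <= energy H (U *m X *m adjmx U).
Proof.
move=> pX hU; rewrite -(trace_conj X hU) energyE /mxtrace Re_sum mulr_sumr.
apply: ler_sum => i _; apply: ler_wpM2r.
  by apply: ge0_Re; apply: psd_diag; apply: psd_conj.
rewrite lerNl; apply: le_trans (ler_norm _) _; rewrite normrN.
by rewrite (bigD1 i) //= lerDl sumr_ge0.
Qed.

Lemma P_lb (X U : 'M[C]_d) : psd X -> unitary U -> Pe X <= energy H (U *m X *m adjmx U).
Proof.
move=> pX hU; apply: ge_inf; last by exists U.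
exists (- (\sum_j `|E j|) * complex.Re (\tr X)) => y [V [hV ->]].
exact: energy_lb.
Qed.

Lemma P_ge (X : 'M[C]_d) c : (forall U, unitary U -> c <= energy H (U *m X *m adjmx U)) ->
  c <= Pe X.
Proof.
move=> h; apply: lb_le_inf.
  by exists (energy H (1%:M *m X *m adjmx 1%:M)); exists 1%:M; split => //; exact: unitary1.
by move=> y [U [hU ->]]; exact: h.
Qed.

Lemma erg_ge0 (X : 'M[C]_d) : psd X -> 0 <= ergotropy H X.
Proof.
move=> pX; rewrite ergE subr_ge0.
by have := P_lb pX unitary1; rewrite adjmx1 mul1mx mulmx1.
Qed.
End Basics.
Arguments qf {R n}.
Arguments Pe {R d}.
Section ZD.
Context {R : realType}.
Local Notation C := R[i].
Lemma conjcR (a : R) : conjc (a%:C) = a%:C :> C.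
Proof. by rewrite /conjc /= oppr0. Qed.

Lemma conjc_scal (a : R) (z : C) : conjc (- (a%:C * z)) = - (a%:C * conjc z).
Proof. by case: z => x y; simpc. Qed.

Lemma bilm n (X : 'M[C]_n) k l :
  delta_mx 0 k *m X *m delta_mx l 0 = (X k l)%:M :> 'M_1.
Proof.
rewrite -rowE -colE; apply/matrixP => a b.
by rewrite !ord1 !mxE eqxx mulr1n.
Qed.

Lemma qf_two n (X : 'M[C]_n) (a : C) i j :
  qf (a *: delta_mx i 0 + delta_mx j 0) X =
  conjc a * a * X i i + conjc a * X i j + a * X j i + X j j.
Proof.
rewrite /qf adjmxD adjmxZ !adjmx_delta !mulmxDl !mulmxDr -!scalemxAl -!scalemxAr.
rewrite !bilm !mxE !eqxx !mulr1n.
ring.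
Qed.

Lemma psd_zero_diag n (X : 'M[C]_n) i j : psd X -> X i i = 0 -> X i j = 0.
Proof.
move=> pX Xii; case: pX => hX pX.
have Xji : X j i = conjc (X i j) by rewrite {1}hX adjmxE.
have [r r0 Xjj] : exists2 r : R, 0 <= r & X j j = r%:C.
  exists (complex.Re (X j j)); first by apply: ge0_Re; apply: psd_diag.
  by apply: ge0_real; apply: psd_diag.
set z := X i j.
apply/eqP; apply: contraT => z0.
have [m m0 nE] : exists2 m : R, 0 < m & z * conjc z = m%:C.
  have n0 : 0 <= z * conjc z by apply: mulcJ_ge0.
  exists (complex.Re (z * conjc z)); last by apply: ge0_real.
  rewrite lt_def ge0_Re // andbT; apply/negP => /eqP re0.
  have : z * conjc z = 0 by rewrite (ge0_real n0) re0.
  by move/eqP; rewrite mulf_eq0 conjc_eq0 orbb (negPf z0).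
set c : R := (r + 1) / (2 * m).
have := pX ((- (c%:C * z)) *: delta_mx i 0 + delta_mx j 0).
rewrite -/(qf _ _) qf_two Xii Xji Xjj -/z.
rewrite mulr0 add0r conjc_scal.
have -> : - (c%:C * conjc z) * z + - (c%:C * z) * conjc z + r%:C = (r - 2 * c * m)%:C.
  transitivity (r%:C - 2%:R * c%:C * (z * conjc z)); first by ring.
  by rewrite nE rmorphB !rmorphM rmorph_nat.
have -> : r - 2 * c * m = -1.
  rewrite /c; field; exact: lt0r_neq0.
by rewrite ler0c ler0N1.
Qed.
End ZD.
Section Chan.
Context {R : realType}.
Local Notation C := R[i].
Variable d : nat.
Implicit Types (X Y M : 'M[C]_d).

Lemma qfE n (v : 'cV[C]_n) (M : 'M[C]_n) :
  qf v M = \sum_l (\sum_k conjc (v k 0) * M k l) * v l 0.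
Proof.
rewrite /qf mxE; apply: eq_bigr => l _; rewrite mxE; congr (_ * _).
by apply: eq_bigr => k _; rewrite adjmxE.
Qed.

Section Lin.
Variable Phi : 'M[C]_d -> 'M[C]_d.
Hypothesis lin : forall (a : C) (A B : 'M[C]_d), Phi (a *: A + B) = a *: Phi A + Phi B.

Lemma Phi0 : Phi 0 = 0.
Proof.
have := lin 1 0 0; rewrite scaler0 addr0 scale1r => h.
have := congr1 (fun x => x - Phi 0) h; rewrite /= subrr addrK => <-. done.
Qed.
Lemma PhiD A B : Phi (A + B) = Phi A + Phi B.
Proof. by have := lin 1 A B; rewrite !scale1r. Qed.
Lemma PhiZ a A : Phi (a *: A) = a *: Phi A.
Proof. by have := lin a A 0; rewrite !addr0 Phi0 addr0. Qed.
Lemma Phi_sum (I : Type) (r : seq I) (P : pred I) (F : I -> 'M[C]_d) :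
  Phi (\sum_(i <- r | P i) F i) = \sum_(i <- r | P i) Phi (F i).
Proof.
elim/big_rec2: _ => [|i y z _ IH]; first exact: Phi0.
by rewrite PhiD IH.
Qed.
End Lin.

Definition h (a : 'I_d) : 'I_(1 * d) := mxtens_index (ord0 : 'I_1, a).
Definition u (i : 'I_(1 * d)) : 'I_d := (mxtens_unindex i).2.
Arguments h : simpl never.
Arguments u : simpl never.

Lemma uh a : u (h a) = a.
Proof. by rewrite /u /h mxtens_indexK. Qed.
Lemma hu i : h (u i) = i.
Proof.
rewrite /h /u -[RHS]mxtens_unindexK; congr mxtens_index.
by case: (mxtens_unindex i) => x y /=; rewrite [x]ord1 [ord0]ord1.
Qed.
Lemma h_bij : bijective h.
Proof. by exists u; [exact: uh | exact: hu]. Qed.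

Definition liftm (M : 'M[C]_d) : 'M[C]_(1 * d) := \matrix_(i, j) M (u i) (u j).

Lemma sum_lift (F : 'I_(1 * d) -> C) : \sum_i F i = \sum_a F (h a).
Proof. exact: (reindex h (onW_bij _ h_bij)). Qed.

Lemma qf_lift (v : 'cV[C]_d) M : qf (\col_i v (u i) 0) (liftm M) = qf v M.
Proof.
rewrite !qfE sum_lift; apply: eq_bigr => l _.
rewrite sum_lift !mxE uh; congr (_ * _); apply: eq_bigr => k _.
by rewrite !mxE !uh.
Qed.

Lemma psd_lift M : psd M -> psd (liftm M).
Proof.
case=> hM pM; split.
  by apply/matrixP => i j; rewrite adjmxE !mxE {1}hM adjmxE.
move=> w; rewrite -/(qf _ _).
have -> : w = \col_i (\col_a w (h a) 0) (u i) 0.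
  by apply/matrixP => i j; rewrite !mxE hu [j]ord1.
by rewrite qf_lift; apply: pM.
Qed.

Lemma psd_unlift M : psd (liftm M) -> psd M.
Proof.
case=> hM pM; split.
  apply/matrixP => a b.
  have := congr1 (fun X : 'M[C]_(1 * d) => X (h a) (h b)) hM; rewrite /= !adjmxE !mxE !uh.
  by move=> ->.
by move=> v; rewrite -/(qf _ _) -qf_lift; apply: pM.
Qed.

Lemma ampl_lift (Phi : 'M[C]_d -> 'M[C]_d) M : ampl Phi (liftm M) = liftm (Phi M).
Proof.
apply/matrixP => i j; rewrite !mxE; congr (Phi _ _ _).
by apply/matrixP => a b; rewrite !mxE /u !mxtens_indexK.
Qed.

Lemma ch_psd (Phi : 'M[C]_d -> 'M[C]_d) M : channel Phi -> psd M -> psd (Phi M).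
Proof.
case=> _ _ cp pM; apply: psd_unlift; rewrite -ampl_lift.
by apply: cp; apply: psd_lift.
Qed.

Lemma ch_state (Phi : 'M[C]_d -> 'M[C]_d) M : channel Phi -> state M -> state (Phi M).
Proof.
move=> ch [pM tM]; split; first exact: ch_psd.
by case: ch => _ -> _.
Qed.

Lemma tr_delta (k : 'I_d) : \tr (delta_mx k k : 'M[C]_d) = 1.
Proof.
rewrite /mxtrace (bigD1 k) //= big1 => [|i /negPf ik]; first by rewrite mxE !eqxx addr0.
by rewrite mxE ik.
Qed.

Lemma state_delta (k : 'I_d) : state (delta_mx k k : 'M[C]_d).
Proof.
split; last exact: tr_delta.
have := @psd_rank1 _ _ (delta_mx k 0 : 'cV[C]_d).
by rewrite adjmx_delta mul_delta_mx.
Qed.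

Lemma EP_unital (Phi : 'M[C]_d -> 'M[C]_d) : energy_preserving Phi -> Phi 1%:M = 1%:M.
Proof.
case=> ch ep; have lin : forall (a : C) (A B : 'M[C]_d), Phi (a *: A + B) = a *: Phi A + Phi B.
  by case: ch.
rewrite mx1_sum_delta Phi_sum //; apply: eq_bigr => k _.
have sk := state_delta k.
have [pk _] := ch_state ch sk.
have dg := ep _ sk.
apply/matrixP => i j; rewrite [RHS]mxE.
have [ik|ik] := eqVneq i k.
  have [jk|jk] := eqVneq j k.
    by rewrite ik jk dg mxE; case: eqP.
  rewrite ik; case: pk => hk _; rewrite hk adjmxE (psd_zero_diag (X:=Phi (delta_mx k k)) _ (ch_psd ch (proj1 sk))).
    by rewrite conjc0.
  by rewrite dg mxE (negPf jk).
rewrite (psd_zero_diag _ pk) //.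
by rewrite dg mxE (negPf ik).
Qed.
End Chan.
Section Comb.
Context {R : realType}.

Lemma dual_sorted n (E nu : 'I_n -> R) (T : 'I_n -> 'I_n -> R) :
  (forall i j : 'I_n, (i <= j)%N -> E i <= E j) ->
  (forall i j : 'I_n, (i <= j)%N -> nu j <= nu i) ->
  (forall i j, 0 <= T i j) -> (forall j, \sum_i T i j = 1) -> (forall i, \sum_j T i j = 1) ->
  \sum_i E i * nu i <= \sum_i \sum_j E i * T i j * nu j.
Proof.
case: n E nu T => [|n] E nu T hE hnu hT hc hr; first by rewrite !big_ord0.
pose e k := E (inord k); pose v k := nu (inord k).
pose u k := \sum_(0 <= m < k) (e m.+1 - e m) * v m.
have eE : forall i : 'I_n.+1, e i = E i by move=> i; rewrite /e inord_val.
have vE : forall i : 'I_n.+1, v i = nu i by move=> i; rewrite /v inord_val.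
have he : forall m, (m < n)%N -> e m <= e m.+1.
  move=> m mn; rewrite /e; apply: hE; rewrite !inordK //; lia.
have hv : forall m k, (m <= k <= n)%N -> v k <= v m.
  move=> m k /andP[mk kn]; rewrite /v; apply: hnu; rewrite !inordK //; lia.
have key1 : forall a b, (a <= b <= n)%N ->
    (e b - e a) * v b <= u b - u a <= (e b - e a) * v a.
  move=> a b /andP[ab bn].
  have -> : u b - u a = \sum_(a <= m < b) (e m.+1 - e m) * v m.
    by rewrite /u (big_cat_nat (leq0n a) ab) /= addrC addrK.
  rewrite -(telescope_sumr _ ab) !mulr_suml; apply/andP; split.
    rewrite big_nat_cond [X in _ <= X]big_nat_cond. apply: (ler_sum (index_iota a b)) => m /andP[/andP[am mb] _].
    apply: ler_wpM2l; first by rewrite subr_ge0; apply: he; lia.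
    by apply: hv; lia.
  rewrite big_nat_cond [X in _ <= X]big_nat_cond; apply: ler_sum => m /andP[/andP[am mb] _].
  apply: ler_wpM2l; first by rewrite subr_ge0; apply: he; lia.
  by apply: hv; lia.
have key : forall i j : 'I_n.+1, u i - u j <= (E i - E j) * nu j.
  move=> i j; case: (leqP j i) => ji.
    have := key1 j i; rewrite ji (leq_ord i) => /(_ isT) /andP[_].
    by rewrite !eE vE.
  have := key1 i j; rewrite (ltnW ji) (leq_ord j) => /(_ isT) /andP[h1 _].
  move: h1; rewrite !eE vE => h1.
  rewrite mulrBl in h1 *; lra.
have LHSeq : \sum_i E i * nu i = \sum_i \sum_j T i j * (u i + (E j * nu j - u j)).
  symmetry.
  transitivity (\sum_i (\sum_j T i j * u i + \sum_j T i j * (E j * nu j - u j))).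
    by apply: eq_bigr => i _; rewrite -big_split /=; apply: eq_bigr => j _; rewrite mulrDr.
  rewrite big_split /=.
  have -> : \sum_i \sum_j T i j * u i = \sum_(i < n.+1) u i.
    by apply: eq_bigr => i _; rewrite -mulr_suml hr mul1r.
  have -> : \sum_i \sum_j T i j * (E j * nu j - u j) = \sum_(j < n.+1) (E j * nu j - u j).
    by rewrite exchange_big; apply: eq_bigr => j _; rewrite -mulr_suml hc mul1r.
  by rewrite -big_split /=; apply: eq_bigr => i _; rewrite addrC subrK.
rewrite LHSeq; apply: ler_sum => i _; apply: ler_sum => j _.
rewrite [E i * T i j]mulrC -mulrA; apply: ler_wpM2l; first exact: hT.
have := key i j; rewrite mulrBl; lra.
Qed.
End Comb.
Section Comb2.
Context {R : realType}.

Lemma comb n (E l : 'I_n -> R) (T : 'I_n -> 'I_n -> R) :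
  (forall i j : 'I_n, (i < j)%N -> E i < E j) ->
  (forall i j, 0 <= T i j) -> (forall j, \sum_i T i j = 1) -> (forall i, \sum_j T i j = 1) ->
  exists s : 'S_n, \sum_i E i * l (s i) <= \sum_i \sum_k E i * T i k * l k.
Proof.
move=> hE hT hc hr.
pose g (s : 'S_n) := \sum_i E i * l (s i).
have [s _ hs] := @arg_minP _ R _ 1%g xpredT g isT.
exists s.
have sorted : forall i j : 'I_n, (i <= j)%N -> l (s j) <= l (s i).
  move=> i j; rewrite leq_eqVlt => /orP[/eqP ij|ij].
    by have -> : i = j by apply: val_inj.
  rewrite leNgt; apply/negP => lt.
  have ji : j != i by rewrite neq_ltn ij orbT.
  have := hs (tperm i j * s)%g isT; rewrite /g.
  rewrite -subr_ge0 -sumrB (bigD1 i) //= (bigD1 j) //= big1; last first.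
    move=> x /andP[xi xj]; rewrite permM tpermD 1?eq_sym //; first by rewrite subrr.
  rewrite permM tpermL permM tpermR addr0.
  have : 0 < (E j - E i) * (l (s j) - l (s i)).
    by apply: mulr_gt0; rewrite subr_gt0 //; apply: hE.
  rewrite !mulrBr !mulrBl; lra.
have -> : \sum_i \sum_k E i * T i k * l k = \sum_i \sum_j E i * T i (s j) * l (s j).
  apply: eq_bigr => i _; exact: (reindex_inj (@perm_inj _ s)).
apply: dual_sorted => //.
- move=> i j; rewrite leq_eqVlt => /orP[/eqP ij|ij].
    by have -> : i = j by apply: val_inj.
  by apply: ltW; apply: hE.
- move=> i; rewrite -(hr i); symmetry; exact: (reindex_inj (@perm_inj _ s)).
Qed.
End Comb2.
Section Key.
Local Open Scope sesquilinear_scope.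
Context {R : realType}.
Local Notation C := R[i].
Variable d : nat.
Variable E : 'I_d -> R.
Hypothesis hE : forall i j : 'I_d, (i < j)%N -> E i < E j.
Local Notation H := (hamiltonian E).

Lemma adj_tc m n (A : 'M[C]_(m, n)) : adjmx A = A ^t*.
Proof. by apply/matrixP => i j; rewrite !mxE. Qed.

Lemma energy_sum (I : Type) (r : seq I) (P : pred I) (a : I -> R) (M : I -> 'M[C]_d) :
  energy H (\sum_(i <- r | P i) (a i)%:C *: M i) = \sum_(i <- r | P i) a i * energy H (M i).
Proof.
elim/big_rec2: _ => [|i y z _ IH].
  by rewrite /energy mulmx0 mxtrace0.
by rewrite energy_lin IH.
Qed.

Lemma adj_perm (s : 'S_d) : adjmx (perm_mx s : 'M[C]_d) = perm_mx s^-1.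
Proof.
rewrite -tr_perm_mx; apply/matrixP => i j; rewrite !mxE.
by rewrite conjc_nat.
Qed.

Lemma unitary_perm (s : 'S_d) : unitary (perm_mx s : 'M[C]_d).
Proof.
by rewrite /unitary adj_perm -!perm_mxM mulgV mulVg perm_mx1.
Qed.

Lemma perm_conj_diag (s : 'S_d) (D : 'rV[C]_d) i :
  (perm_mx s *m diag_mx D *m adjmx (perm_mx s)) i i = D 0 (s i).
Proof.
by rewrite adj_perm -row_permE -col_permE !mxE eqxx mulr1n.
Qed.

Lemma key_ineq (Phi : 'M[C]_d -> 'M[C]_d) (rho : 'M[C]_d) :
  (forall (a : C) (A B : 'M[C]_d), Phi (a *: A + B) = a *: Phi A + Phi B) ->
  (forall A, \tr (Phi A) = \tr A) ->
  (forall M, psd M -> psd (Phi M)) ->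
  Phi 1%:M = 1%:M ->
  psd rho -> Pe E rho <= Pe E (Phi rho).
Proof.
move=> lin tp pos un prho.
have nrm : rho \is normalmx.
  apply/normalmxP; rewrite -adj_tc; case: prho => <- _; done.
pose W := spectralmx rho; pose lam := spectral_diag rho.
have rhoE : rho = adjmx W *m diag_mx lam *m W.
  by rewrite adj_tc -invmx_unitary ?spectral_unitarymx //; apply/orthomx_spectralP.
have uW : unitary W.
  split.
    by rewrite adj_tc -invmx_unitary ?spectral_unitarymx // mulVmx // unitarymx_unit // spectral_unitarymx.
  by rewrite adj_tc; apply/unitarymxP; exact: spectral_unitarymx.
have uWd : unitary (adjmx W) by apply: unitary_adj.
pose Q k := adjmx W *m delta_mx k k *m W.
have decomp : forall dv : 'rV[C]_d, adjmx W *m diag_mx dv *m W = \sum_k dv 0 k *: Q k.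
  move=> dv; rewrite diag_mx_sum_delta mulmx_sumr mulmx_suml; apply: eq_bigr => k _.
  by rewrite /Q -scalemxAr -scalemxAl.
have psdQ : forall k, psd (Q k).
  move=> k; rewrite /Q -[X in _ *m X](adjmxK W); apply: psd_conj.
  exact: (proj1 (state_delta k)).
have sumQ : \sum_k Q k = 1%:M.
  have := decomp (const_mx 1); rewrite diag_const_mx mulmx1; case: uW => -> _ ->.
  by apply: eq_bigr => k _; rewrite mxE scale1r.
have Wrho : W *m rho *m adjmx W = diag_mx lam.
  rewrite rhoE !mulmxA; case: uW => h1 h2.
  by rewrite h2 mul1mx -mulmxA h2 mulmx1.
have lam_ge0 : forall k, 0 <= lam 0 k.
  move=> k; have := psd_diag k (psd_conj W prho).
  by rewrite Wrho mxE eqxx mulr1n.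
pose lr k := complex.Re (lam 0 k).
have lamE : forall k, lam 0 k = (lr k)%:C by move=> k; apply: ge0_real.
have rhoE2 : rho = \sum_k (lr k)%:C *: Q k.
  by rewrite {1}rhoE decomp; apply: eq_bigr => k _; rewrite lamE.
apply: P_ge => V hV.
pose T i k := complex.Re ((V *m Phi (Q k) *m adjmx V) i i).
have enE : energy H (V *m Phi rho *m adjmx V) = \sum_i \sum_k E i * T i k * lr k.
  rewrite rhoE2 Phi_sum // mulmx_sumr mulmx_suml.
  have -> : \sum_k V *m Phi ((lr k)%:C *: Q k) *m adjmx V =
            \sum_k (lr k)%:C *: (V *m Phi (Q k) *m adjmx V).
    by apply: eq_bigr => k _; rewrite PhiZ // -scalemxAr -scalemxAl.
  rewrite energy_sum exchange_big; apply: eq_bigr => k _.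
  rewrite energyE mulr_sumr; apply: eq_bigr => i _.
  by rewrite /T mulrC.
have T0 : forall i k, 0 <= T i k.
  move=> i k; apply: ge0_Re; apply: psd_diag; apply: psd_conj; exact: pos.
have Tc : forall k, \sum_i T i k = 1.
  move=> k; rewrite /T -Re_sum -/(mxtrace _) (trace_conj _ hV) tp.
  by rewrite /Q -{2}(adjmxK W) (trace_conj _ uWd) tr_delta.
have Tr : forall i, \sum_k T i k = 1.
  move=> i; rewrite /T -Re_sum -(summxE _ _ (fun k => V *m Phi (Q k) *m adjmx V)).
  rewrite -mulmx_suml -mulmx_sumr -Phi_sum // sumQ un mulmx1.
  by case: hV => _ ->; rewrite mxE eqxx.
have [s hs] := comb lr hE T0 Tc Tr.
rewrite enE; apply: le_trans hs.
have := P_lb E prho (unitaryM (unitary_perm s) uW).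
rewrite adjmxM.
have -> : perm_mx s *m W *m rho *m (adjmx W *m adjmx (perm_mx s)) =
  perm_mx s *m (W *m rho *m adjmx W) *m adjmx (perm_mx s) by rewrite !mulmxA.
rewrite Wrho => h.
apply: (le_trans h); rewrite energyE le_eqVlt; apply/orP; left; apply/eqP.
by apply: eq_bigr => i _; rewrite perm_conj_diag lamE.
Qed.
End Key.
Section Main.
Context {R : realType}.
Local Notation C := R[i].
Variable d : nat.
Variable E : 'I_d -> R.
Hypothesis hE : forall i j : 'I_d, (i < j)%N -> E i < E j.
Local Notation H := (hamiltonian E).

Lemma energyZ (a : R) (X : 'M[C]_d) : energy H (a%:C *: X) = a * energy H X.
Proof.
have := energy_lin E a X 0; rewrite addr0 => ->.
by rewrite /energy mulmx0 mxtrace0 addr0.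
Qed.

Lemma energyD (X Y : 'M[C]_d) : energy H (X + Y) = energy H X + energy H Y.
Proof. by have := energy_lin E 1 X Y; rewrite scale1r mul1r. Qed.

Lemma part1 (Phi : 'M[C]_d -> 'M[C]_d) (tau : 'M[C]_d) (p : R) (rho : 'M[C]_d) :
  energy_preserving Phi \/ unital_energy_nonincreasing H Phi ->
  passive H tau -> 0 <= p <= 1 -> state rho ->
  ergotropy H ((p%:C) *: Phi rho + ((1 - p)%:C) *: tau) <= ergotropy H rho.
Proof.
move=> hPhi [[ptau _] etau] /andP[p0 p1] srho.
have ch : channel Phi by case: hPhi => [[]|[]].
have lin : forall (a : C) (A B : 'M[C]_d), Phi (a *: A + B) = a *: Phi A + Phi B by case: ch.
have tp : forall A, \tr (Phi A) = \tr A by case: ch.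
have pos : forall M, psd M -> psd (Phi M) by move=> M; exact: ch_psd.
have un : Phi 1%:M = 1%:M by case: hPhi => [/EP_unital|[]].
have en : energy H (Phi rho) <= energy H rho.
  case: hPhi => [[_ ep]|[_ _ ->]] //.
  by rewrite !energyE le_eqVlt; apply/orP; left; apply/eqP; apply: eq_bigr => i _; rewrite ep.
case: (srho) => prho _.
have pPr := pos _ prho.
have k := key_ineq hE lin tp pos un prho.
have hsig : p * Pe E (Phi rho) + (1 - p) * Pe E tau <=
    Pe E (p%:C *: Phi rho + (1 - p)%:C *: tau).
  apply: P_ge => U hU.
  rewrite mulmxDr mulmxDl -!scalemxAr -!scalemxAl energyD !energyZ.
  apply: lerD; apply: ler_wpM2l; rewrite ?subr_ge0 //; exact: P_lb.
have eg := erg_ge0 E pPr.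
move: etau eg; rewrite !ergE energyD !energyZ => etau eg.
have et : energy H tau = Pe E tau by apply/eqP; rewrite -subr_eq0 etau.
rewrite et.
apply: le_trans (lerB (lexx (p * energy H (Phi rho) + (1 - p) * Pe E tau)) hsig) _.
rewrite [p * Pe E (Phi rho) + _]addrC opprD addrA addrK -mulrBr.
apply: (@le_trans _ _ (energy H (Phi rho) - Pe E (Phi rho))).
  rewrite -[X in _ <= X]mul1r; apply: ler_wpM2r; [exact: eg | exact: p1].
exact: (lerB en k).
Qed.

Lemma step_ok (Psi : 'M[C]_d -> 'M[C]_d) (rho : 'M[C]_d) :
  epcpr_step H Psi -> state rho ->
  state (Psi rho) /\ ergotropy H (Psi rho) <= ergotropy H rho.
Proof.
move=> [p [Phi [tau [hp ep ptau hPsi]]]] srho.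
have -> : Psi rho = p%:C *: Phi rho + (1 - p)%:C *: tau.
  rewrite hPsi; case: srho => _ ->; rewrite mulr1; reflexivity.
split; last first.
  exact: (part1 (or_introl ep) ptau hp srho).
case: (ep) => ch _; have [pP tP] := ch_state ch srho.
case: (ptau) => [[pt tt] _]; case/andP: hp => p0 p1.
split.
  apply: psd_add; apply: psd_scale; [exact: p0 | exact: pP | rewrite subr_ge0; exact: p1 | exact: pt].
rewrite mxtraceD !mxtraceZ tP tt !mulr1 -rmorphD /= addrC subrK.
exact: rmorph1.
Qed.
End Main.

Theorem mainTheorem1 (R : realType) (d : nat) (E : 'I_d -> R)
  (hE : forall i j : 'I_d, (i < j)%N -> E i < E j) :
  (forall (Phi : 'M[R[i]]_d -> 'M[R[i]]_d) (tau : 'M[R[i]]_d) (p : R),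
     energy_preserving Phi \/ unital_energy_nonincreasing (hamiltonian E) Phi ->
     passive (hamiltonian E) tau ->
     0 <= p <= 1 ->
     forall rho : 'M[R[i]]_d, state rho ->
       ergotropy (hamiltonian E) ((p%:C) *: Phi rho + ((1 - p)%:C) *: tau)
       <= ergotropy (hamiltonian E) rho)
  /\
  (forall Psi : 'M[R[i]]_d -> 'M[R[i]]_d, epcpr (hamiltonian E) Psi ->
     forall rho : 'M[R[i]]_d, state rho ->
       ergotropy (hamiltonian E) (Psi rho) <= ergotropy (hamiltonian E) rho).
Proof.
split.
  move=> Phi tau p hPhi ptau hp rho srho; exact: (part1 hE hPhi ptau hp srho).
move=> Psi [s [hs hPsi]] rho srho; rewrite hPsi.
suff : state (foldr (fun f g => f \o g) id s rho) /\
    ergotropy (hamiltonian E) (foldr (fun f g => f \o g) id s rho) <= ergotropy (hamiltonian E) rho.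
  by case.
elim: s hs {hPsi} => [|f s IH] hs /=.
  split; [exact: srho | exact: lexx].
have [st er] := IH (fun k hk => hs k.+1 hk).
have [st' er'] := step_ok hE (hs 0%N isT) st.
split; [exact: st' | exact: le_trans er' er].
Qed.
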